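(* Let $m\ge n$, $B\in\mathbb R^{n\times m}$ of full row rank, $f,h$ convex and continuously differentiable with Lipschitz gradients, $\mathcal L(u,p)=f(u)-h(p)+(Bu,p)$ with saddle point $(u^*,p^* )$, and $\mathcal I_{\mathcal V},\mathcal I_{\mathcal Q}$ symmetric positive definite. Suppose $f\in\mathcal S^{1,1}_{\mu_{f,\mathcal I_{\mathcal V}},L_{f,\mathcal I_{\mathcal V}}}$ with respect to $\mathcal I_{\mathcal V}$ with $0<\mu_{f,\mathcal I_{\mathcal V}}\le L_{f,\mathcal I_{\mathcal V}}<2$. Let $(u_k,p_k)_{k\ge0}$ satisfy the implicit Euler scheme $$u_{k+1}=u_k+\alpha_k\mathcal G^u(u_{k+1},p_{k+1}),\qquad p_{k+1}=p_k+\alpha_k\mathcal G^p(u_{k+1},p_{k+1})$$ with step sizes $\alpha_k>0$. Then for every $\alpha_k>0$ and $k\ge0$, $$\mathcal E(u_{k+1},p_{k+1})\le\frac{1}{1+\alpha_k\mu}\mathcal E(u_k,p_k),$$ where $\mu=\min\{\mu_{\mathcal V},\mu_{\mathcal Q}\}$.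
   Context: For SPD $M$, $\|x\|_M=(Mx,x)^{1/2}$; $D_g(y,x)=g(y)-g(x)-(\nabla g(x),y-x)$; $g\in\mathcal S^{1,1}_{\mu_{g,M},L_{g,M}}$ w.r.t. $M$ means $\frac{\mu_{g,M}}2\|x-y\|_M^2\le D_g(y,x)\le\frac{L_{g,M}}2\|x-y\|_M^2$ for all $x,y$. A saddle point satisfies $\nabla f(u^* )+B^\top p^*=0$, $Bu^*=\nabla h(p^* )$. Define $e(u)=u-\mathcal I_{\mathcal V}^{-1}\nabla f(u)$, $h_B(p)=h(p)+\frac12(B\mathcal I_{\mathcal V}^{-1}B^\top p,p)$, $\mathcal G^u(u,p)=-\mathcal I_{\mathcal V}^{-1}(\nabla f(u)+B^\top p)$, $\mathcal G^p(u,p)=-\mathcal I_{\mathcal Q}^{-1}(\nabla h_B(p)-Be(u))$, and $\mathcal E(u,p)=\frac12\|u-u^*\|^2_{\mathcal I_{\mathcal V}}+\frac12\|p-p^*\|^2_{\mathcal I_{\mathcal Q}}$. Constants: $\mu_{\mathcal V}=\mu_{f,\mathcal I_{\mathcal V}}$, $\mu_{\mathcal Q}=(2-L_{f,\mathcal I_{\mathcal V}})\mu_{h_B,\mathcal I_{\mathcal Q}}$, where $\mu_{h_B,\mathcal I_{\mathcal Q}}$ is the strong convexity constant of $h_B$ with respect to $\mathcal I_{\mathcal Q}$. *)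

(* Defs.v *)
From HB Require Import structures.
From mathcomp Require Import all_boot all_order all_algebra.
From mathcomp Require Import all_classical all_reals all_analysis.
Set Implicit Arguments. Unset Strict Implicit. Unset Printing Implicit Defensive.
Import Order.TTheory GRing.Theory Num.Theory.
Import numFieldNormedType.Exports.
Local Open Scope ring_scope.

Section Defs.
Variable R : realType.

Definition dot m (x y : 'cV[R]_m) : R := (x^T *m y) 0 0.

Definition sqnormM m (M : 'M[R]_m) (x : 'cV[R]_m) : R := dot (M *m x) x.

Definition SPD m (M : 'M[R]_m) : Prop :=
  M^T = M /\ forall x : 'cV[R]_m, x != 0 -> 0 < sqnormM M x.

Definition convex_fun m (g : 'cV[R]_m -> R) : Prop :=
  forall (x y : 'cV[R]_m) (t : R), 0 <= t <= 1 ->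
    g (t *: x + (1 - t) *: y) <= t * g x + (1 - t) * g y.

Definition is_gradient m (g : 'cV[R]_m -> R) (gg : 'cV[R]_m -> 'cV[R]_m) : Prop :=
  forall x, differentiable g x /\ forall v, is_derive x v g (dot (gg x) v).

Definition Dg m (g : 'cV[R]_m -> R) (gg : 'cV[R]_m -> 'cV[R]_m) (y x : 'cV[R]_m) : R :=
  g y - g x - dot (gg x) (y - x).

Definition S11 m (g : 'cV[R]_m -> R) (gg : 'cV[R]_m -> 'cV[R]_m)
  (M : 'M[R]_m) (mu L : R) : Prop :=
  forall x y, mu / 2 * sqnormM M (x - y) <= Dg g gg y x
              /\ Dg g gg y x <= L / 2 * sqnormM M (x - y).

Definition strongly_convex m (g : 'cV[R]_m -> R) (gg : 'cV[R]_m -> 'cV[R]_m)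
  (M : 'M[R]_m) (mu : R) : Prop :=
  forall x y, mu / 2 * sqnormM M (x - y) <= Dg g gg y x.

Variables (n m : nat).
Implicit Types (B : 'M[R]_(n, m)) (IV : 'M[R]_m) (IQ : 'M[R]_n).

Definition e_op IV (gf : 'cV[R]_m -> 'cV[R]_m) (u : 'cV[R]_m) : 'cV[R]_m :=
  u - invmx IV *m gf u.

Definition hB B IV (h : 'cV[R]_n -> R) (p : 'cV[R]_n) : R :=
  h p + 1 / 2 * dot (B *m invmx IV *m B^T *m p) p.
Definition grad_hB B IV (gh : 'cV[R]_n -> 'cV[R]_n) (p : 'cV[R]_n) : 'cV[R]_n :=
  gh p + B *m invmx IV *m B^T *m p.

Definition Gu B IV (gf : 'cV[R]_m -> 'cV[R]_m) (u : 'cV[R]_m) (p : 'cV[R]_n) : 'cV[R]_m :=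
  - (invmx IV *m (gf u + B^T *m p)).

Definition Gp B IV IQ (gf : 'cV[R]_m -> 'cV[R]_m) (gh : 'cV[R]_n -> 'cV[R]_n)
  (u : 'cV[R]_m) (p : 'cV[R]_n) : 'cV[R]_n :=
  - (invmx IQ *m (grad_hB B IV gh p - B *m e_op IV gf u)).

Definition Lyap IV IQ (us : 'cV[R]_m) (ps : 'cV[R]_n) (u : 'cV[R]_m) (p : 'cV[R]_n) : R :=
  1 / 2 * sqnormM IV (u - us) + 1 / 2 * sqnormM IQ (p - ps).

End Defs.

(* Main.v *)
Require Import Defs.
From HB Require Import structures.
From mathcomp Require Import all_boot all_order all_algebra.
From mathcomp Require Import all_classical all_reals all_analysis.
From mathcomp Require Import ring lra.
Import Order.TTheory GRing.Theory Num.Theory.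
Import numFieldNormedType.Exports.
Local Open Scope ring_scope.
Set Implicit Arguments. Unset Strict Implicit.

Section DotLemmas.
Variable R : realType.
Implicit Types (k l : nat).

Lemma dotC k (x y : 'cV[R]_k) : dot x y = dot y x.
Proof.
have E : ((x^T *m y)^T) 0 0 = (x^T *m y) 0 0 by rewrite mxE.
by rewrite /dot -E trmx_mul trmxK.
Qed.

Lemma dotDl k (x y z : 'cV[R]_k) : dot (x + y) z = dot x z + dot y z.
Proof. by rewrite /dot linearD /= mulmxDl mxE. Qed.

Lemma dotZl k a (x z : 'cV[R]_k) : dot (a *: x) z = a * dot x z.
Proof. by rewrite /dot linearZ /= -scalemxAl mxE. Qed.

Lemma dotNl k (x z : 'cV[R]_k) : dot (- x) z = - dot x z.
Proof. by rewrite -scaleN1r dotZl mulN1r. Qed.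

Lemma dotBl k (x y z : 'cV[R]_k) : dot (x - y) z = dot x z - dot y z.
Proof. by rewrite dotDl dotNl. Qed.

Lemma dotDr k (x y z : 'cV[R]_k) : dot z (x + y) = dot z x + dot z y.
Proof. by rewrite dotC dotDl !(dotC _ z). Qed.

Lemma dotZr k a (x z : 'cV[R]_k) : dot z (a *: x) = a * dot z x.
Proof. by rewrite dotC dotZl dotC. Qed.

Lemma dotNr k (x z : 'cV[R]_k) : dot z (- x) = - dot z x.
Proof. by rewrite dotC dotNl dotC. Qed.

Lemma dotBr k (x y z : 'cV[R]_k) : dot z (x - y) = dot z x - dot z y.
Proof. by rewrite dotDr dotNr. Qed.

Lemma dot0l k (z : 'cV[R]_k) : dot 0 z = 0.
Proof. by rewrite /dot linear0 mul0mx mxE. Qed.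

Lemma dotMl k l (A : 'M[R]_(k, l)) x y : dot (A *m x) y = dot x (A^T *m y).
Proof. by rewrite /dot trmx_mul mulmxA. Qed.

Lemma SPD_ge0 k (M : 'M[R]_k) x : SPD M -> 0 <= sqnormM M x.
Proof.
case=> _ H; have [->|/H/ltW //] := eqVneq x 0.
by rewrite /sqnormM mulmx0 dot0l.
Qed.

Lemma SPD_unit k (M : 'M[R]_k) : SPD M -> M \in unitmx.
Proof.
move=> [sym H]; apply/negPn/negP => nu.
have : kermx M != 0 by rewrite kermx_eq0 row_free_unit.
move=> K.
have [i nz] : exists i, row i (kermx M) != 0.
  case: (pickP (fun i => row i (kermx M) != 0)) => [i nz|all0]; first by exists i.
  exfalso; apply: (negP K); apply/eqP/row_matrixP => i; rewrite row0.
  by move: (all0 i) => /= /negbFE/eqP.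
set x := (row i (kermx M))^T.
have xnz : x != 0 by rewrite /x; apply: contra_neq nz => /(congr1 trmx); rewrite trmxK trmx0.
have := H x xnz; rewrite /sqnormM.
have -> : M *m x = 0.
  by rewrite /x -{1}sym -trmx_mul -row_mul mulmx_ker row0 trmx0.
by rewrite dot0l ltxx.
Qed.

End DotLemmas.
Lemma grad_ineq (R : realType) k (g : 'cV[R]_k -> R) gg x y :
  convex_fun g -> is_gradient g gg -> dot (gg x) (y - x) <= g y - g x.
Proof.
move=> cvx /(_ x) [_ /(_ (y - x)) [ex val]].
rewrite -val.
have H := cvg_dnbhs_at_right ex.
apply: (cvgr_to_le H).
near=> t.
have t0 : 0 < t by near: t; exact: nbhs_right_gt.
have t1 : t <= 1 by near: t; exact: nbhs_right_le.
rewrite /=. idtac.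
have := cvx y x t; rewrite (ltW t0) t1 => /(_ isT).
have -> : t *: y + (1 - t) *: x = t *: (y - x) + x.
  by rewrite scalerBr scalerBl scale1r [x - _]addrC addrA.
move=> Hc.
change (t^-1 * (g (t *: (y - x) + x) - g x) <= g y - g x).
rewrite mulrC ler_pdivrMr //; nra.
Unshelve. all: by end_near.
Qed.

Section Main.
Variable R : realType.

Lemma sqnormMZ k (M : 'M[R]_k) a x : sqnormM M (a *: x) = a * (a * sqnormM M x).
Proof. by rewrite /sqnormM -scalemxAr dotZl dotZr. Qed.

Lemma sqnormMN k (M : 'M[R]_k) x y : sqnormM M (x - y) = sqnormM M (y - x).
Proof. by rewrite -opprB /sqnormM mulmxN dotNl dotNr opprK. Qed.

Lemma invmx_sym k (M : 'M[R]_k) : M^T = M -> (invmx M)^T = invmx M.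
Proof. by move=> s; rewrite trmx_inv s. Qed.

Lemma inv_psd k (M : 'M[R]_k) x : SPD M -> 0 <= dot (invmx M *m x) x.
Proof.
move=> spd; have U := SPD_unit spd.
have -> : dot (invmx M *m x) x = sqnormM M (invmx M *m x).
  by rewrite /sqnormM dotC mulmxA mulmxV // mul1mx.
exact: SPD_ge0.
Qed.

Lemma cocoercive k (f : 'cV[R]_k -> R) gf M mu L x y :
  SPD M -> S11 f gf M mu L -> 0 <= mu -> 0 < L ->
  1 / (2 * L) * dot (invmx M *m (gf x - gf y)) (gf x - gf y) <= Dg f gf x y.
Proof.
move=> spd S mu0 L0; have U := SPD_unit spd.
set w := gf x - gf y; set V := invmx M.
set z := x - L^-1 *: (V *m w).
have [H1 _] := S y z.
have [_ H2] := S x z.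
have e1 : x - z = L^-1 *: (V *m w) by rewrite /z opprB addrC subrK.
have e2 : z - x = - (L^-1 *: (V *m w)) by rewrite -e1 opprB.
have e3 : z - y = (x - y) - L^-1 *: (V *m w) by rewrite /z addrAC.
have e4 : sqnormM M (V *m w) = dot (V *m w) w.
  by rewrite /sqnormM mulmxA mulmxV // mul1mx dotC.
rewrite /Dg e1 e2 e3 in H1 H2 *.
rewrite sqnormMZ e4 dotNr dotZr in H2.
rewrite dotBr dotZr in H1.
move: H1 H2.
have sq0 := SPD_ge0 (y - z) spd.
have e5 : dot (V *m w) w = dot (gf x) (V *m w) - dot (gf y) (V *m w).
  by rewrite dotC dotBl.
rewrite e5.
set A1 := dot (gf x) _; set A2 := dot (gf y) (V *m w).
set Li := L^-1.
have eL : L * Li = 1 by rewrite /Li mulfV // gt_eqF.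
have eL2 : 1 / (2 * L) = Li / 2 by rewrite /Li; field; rewrite gt_eqF.
rewrite eL2 => H1 H2.
have : 0 <= mu / 2 * sqnormM M (y - z) by apply: mulr_ge0 => //; lra.
move=> H3.
have E : L / 2 * (Li * (Li * (A1 - A2))) = Li / 2 * (A1 - A2).
  by rewrite /Li; field; rewrite gt_eqF.
rewrite E in H2.
nra.
Qed.


Lemma sq_expand k (M : 'M[R]_k) x w : M^T = M ->
  sqnormM M (x - w) = sqnormM M x - 2 * dot (M *m w) x + sqnormM M w.
Proof.
move=> sym; rewrite /sqnormM mulmxBr dotBl !dotBr.
have -> : dot (M *m x) w = dot (M *m w) x by rewrite dotMl sym dotC.
lra.
Qed.

End Main.

Unset Implicit Arguments. Set Strict Implicit.

Theorem theorem4p1 (R : realType) (n m : nat) (B : 'M[R]_(n, m))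
  (f : 'cV[R]_m -> R) (gf : 'cV[R]_m -> 'cV[R]_m)
  (h : 'cV[R]_n -> R) (gh : 'cV[R]_n -> 'cV[R]_n)
  (IV : 'M[R]_m) (IQ : 'M[R]_n)
  (us : 'cV[R]_m) (ps : 'cV[R]_n)
  (mu_f L_f mu_hB : R)
  (u : nat -> 'cV[R]_m) (p : nat -> 'cV[R]_n) (alpha : nat -> R) :
  (n <= m)%N ->
  \rank B = n ->
  convex_fun f -> is_gradient f gf -> continuous gf -> lipschitz gf ->
  convex_fun h -> is_gradient h gh -> continuous gh -> lipschitz gh ->
  (* (us, ps) is a saddle point of L(u,p) = f(u) - h(p) + (Bu, p) *)
  gf us + B^T *m ps = 0 -> B *m us = gh ps ->
  SPD IV -> SPD IQ ->
  S11 f gf IV mu_f L_f -> 0 < mu_f -> mu_f <= L_f -> L_f < 2 ->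
  (* mu_hB : the strong convexity constant of h_B w.r.t. I_Q *)
  0 < mu_hB -> strongly_convex (hB B IV h) (grad_hB B IV gh) IQ mu_hB ->
  (forall k, 0 < alpha k) ->
  (forall k, u k.+1 = u k + alpha k *: Gu B IV gf (u k.+1) (p k.+1)) ->
  (forall k, p k.+1 = p k + alpha k *: Gp B IV IQ gf gh (u k.+1) (p k.+1)) ->
  forall k,
    Lyap IV IQ us ps (u k.+1) (p k.+1)
      <= 1 / (1 + alpha k * Num.min mu_f ((2 - L_f) * mu_hB))
         * Lyap IV IQ us ps (u k) (p k).
Proof.
move=> _ _ _ _ _ _ cvxh gradh _ _ sad1 sad2 spdV spdQ S11f muf0 muL L2 muh0 sch
  alpha0 Hu Hp k.
have UV := SPD_unit spdV; have UQ := SPD_unit spdQ.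
have symV : (invmx IV)^T = invmx IV := invmx_sym spdV.1.
have Hu1 := Hu k; have Hp1 := Hp k; have al0 := alpha0 k.
move: Hu1 Hp1 al0.
move: (u k.+1) (p k.+1) (u k) (p k) (alpha k) => u1 p1 u0 p0 al Hu1 Hp1 al0.
set V := invmx IV.
have eX : gf u1 + B^T *m p1 = (gf u1 - gf us) + B^T *m (p1 - ps).
  rewrite mulmxBr; move: sad1.
  move: (gf u1) (gf us) (B^T *m p1) (B^T *m ps) => x1 x2 x3 x4 H.
  apply/matrixP => i j; move/matrixP: H => /(_ i j).
  rewrite !mxE; lra.
set g := gf u1 - gf us. set a := B^T *m (p1 - ps).
set du := u1 - us. set dp := p1 - ps. set c := gh p1 - gh ps.
have eY : grad_hB B IV gh p1 - B *m e_op IV gf u1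
          = c + B *m (V *m (g + a)) - B *m du.
  rewrite /grad_hB /e_op -!mulmxA /c -eX /du !mulmxBr !mulmxDr sad2.
  move: (gh p1) (gh ps) (B *m u1) (B *m (V *m gf u1))
        (B *m (V *m (B^T *m p1))) => x1 x2 x3 x4 x5.
  apply/matrixP => i j; rewrite !mxE; lra.
have eH : grad_hB B IV gh p1 - grad_hB B IV gh ps = c + B *m (V *m a).
  rewrite /grad_hB -!mulmxA /c /a !mulmxBr.
  move: (gh p1) (gh ps) (B *m (V *m (B^T *m p1))) (B *m (V *m (B^T *m ps)))
     => x1 x2 x3 x4.
  apply/matrixP => i j; rewrite !mxE; lra.
have wu : IV *m (u1 - u0) = - (al *: (g + a)).
  rewrite {1}Hu1 addrAC subrr add0r /Gu scalerN mulmxN -scalemxAr mulmxA.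
  by rewrite mulmxV // mul1mx eX.
have wp : IQ *m (p1 - p0) = - (al *: (c + B *m (V *m (g + a)) - B *m du)).
  rewrite {1}Hp1 addrAC subrr add0r /Gp scalerN mulmxN -scalemxAr mulmxA.
  by rewrite mulmxV // mul1mx eY.
have E0 : Lyap IV IQ us ps u0 p0 =
   Lyap IV IQ us ps u1 p1
   + al * (dot (g + a) du + dot (c + B *m (V *m (g + a)) - B *m du) dp)
   + 1/2 * sqnormM IV (u1 - u0) + 1/2 * sqnormM IQ (p1 - p0).
  rewrite /Lyap.
  have -> : u0 - us = du - (u1 - u0) by apply/matrixP => i j; rewrite /du !mxE; lra.
  have -> : p0 - ps = dp - (p1 - p0) by apply/matrixP => i j; rewrite /dp !mxE; lra.
  rewrite (sq_expand _ _ spdV.1) (sq_expand _ _ spdQ.1) wu wp.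
  rewrite !dotNl !dotZl /du /dp; lra.
set mu := Num.min mu_f ((2 - L_f) * mu_hB).
have L0 : 0 < L_f by lra.
have S0 : dot (g + a) du + dot (c + B *m (V *m (g + a)) - B *m du) dp
   = dot g du + dot c dp + dot (V *m g) a + dot (V *m a) a.
  have ea : a = B^T *m dp by [].
  clearbody g a du dp c.
  rewrite dotDl dotBl dotDl (dotMl B) (dotMl B) -ea mulmxDr dotDl (dotC a du); lra.
have F1 : mu_f / 2 * sqnormM IV du + 1 / (2 * L_f) * dot (V *m g) g <= dot g du.
  have C := cocoercive u1 us spdV S11f (ltW muf0) L0.
  have [C2 _] := S11f u1 us.
  move: C C2; rewrite /Dg -/g -/du -/V.
  have -> : us - u1 = - du by rewrite opprB.
  rewrite /g dotNr dotBl; lra.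
have F2 : mu_hB * sqnormM IQ dp <= dot c dp + dot (V *m a) a.
  have H1 := sch p1 ps; have H2 := sch ps p1.
  move: H1 H2; rewrite /Dg (sqnormMN _ ps p1) -/dp.
  have -> : ps - p1 = - dp by rewrite opprB.
  rewrite dotNr.
  have : dot (grad_hB B IV gh p1 - grad_hB B IV gh ps) dp = dot c dp + dot (V *m a) a.
    by rewrite eH dotDl dotMl.
  rewrite dotBl; lra.
have F3 : 0 <= dot c dp.
  have H1 := grad_ineq p1 ps cvxh gradh; have H2 := grad_ineq ps p1 cvxh gradh.
  move: H1 H2; rewrite -/dp.
  have -> : ps - p1 = - dp by rewrite opprB.
  rewrite dotNr /c dotBl; lra.
have F4 : 0 <= L_f ^+ 2 * dot (V *m a) a + 2 * L_f * dot (V *m g) a + dot (V *m g) g.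
  have := inv_psd (L_f *: a + g) spdV.
  clearbody g a.
  rewrite -/V mulmxDr -scalemxAr !dotDl !dotDr !dotZl !dotZr.
  have -> : dot (V *m a) g = dot (V *m g) a by rewrite dotMl symV dotC.
  lra.
have sqdu := SPD_ge0 du spdV; have sqdp := SPD_ge0 dp spdQ.
have Hmu1 : mu <= mu_f by rewrite /mu ge_min lexx.
have Hmu2 : mu <= (2 - L_f) * mu_hB by rewrite /mu ge_min lexx orbT.
have mu0 : 0 < mu by rewrite /mu lt_min muf0 /=; apply: mulr_gt0 => //; lra.
set Sdu := sqnormM IV du in F1 sqdu *. set Sdp := sqnormM IQ dp in F2 sqdp *.
set Gg := dot (V *m g) g in F1 F4 *. set Ga := dot (V *m g) a in F4 *.
set Aa := dot (V *m a) a in F2 F4 *. set Cc := dot c dp in F2 F3 *.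
have F4' : 0 <= L_f / 2 * Aa + Ga + 1 / (2 * L_f) * Gg.
  have : 0 <= 1 / (2 * L_f) * (L_f ^+ 2 * Aa + 2 * L_f * Ga + Gg).
    by apply: mulr_ge0 => //; rewrite divr_ge0 //; lra.
  have -> : 1 / (2 * L_f) * (L_f ^+ 2 * Aa + 2 * L_f * Ga + Gg)
          = L_f / 2 * Aa + Ga + 1 / (2 * L_f) * Gg by field; rewrite gt_eqF.
  done.
have K : mu * (1/2 * Sdu + 1/2 * Sdp) <= dot g du + Cc + Ga + Aa.
  have T1 : mu * Sdu <= mu_f * Sdu by apply: ler_wpM2r.
  have T2 : mu * Sdp <= (2 - L_f) * mu_hB * Sdp by apply: ler_wpM2r.
  have T3 : (2 - L_f) * (mu_hB * Sdp) <= (2 - L_f) * (Cc + Aa).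
    by apply: ler_wpM2l; lra.
  have T4 : 0 <= L_f * Cc by apply: mulr_ge0; lra.
  nra.
have ESq1 := SPD_ge0 (u1 - u0) spdV; have ESq2 := SPD_ge0 (p1 - p0) spdQ.
rewrite S0 in E0.
have EL1 : Lyap IV IQ us ps u1 p1 = 1/2 * Sdu + 1/2 * Sdp by [].
rewrite EL1 in E0 *.
rewrite (div1r (1 + al * mu)) ler_pdivlMl; last by apply: addr_gt0 => //; apply: mulr_gt0.
have := ler_wpM2l (ltW al0) K.
set S := dot g du + Cc + Ga + Aa in E0 *.
rewrite E0; nra.
Qed.
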